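(* Let $n\ge 1$. The path $P_n$ is pseudo-Gorenstein$^{*}$ if and only if $n\equiv 0,2,9,11 \pmod{12}$.
   Context: For a finite simple graph $G$ on vertex set $[N]$, let $S=K[x_1,\dots,x_N]$ ($K$ a field) and $I(G)$ the edge ideal generated by $x_ix_j$, $\{i,j\}\in E(G)$. Let $\alpha(G)$ be the independence number (equal to $\dim S/I(G)$). Write the Hilbert series of $S/I(G)$ uniquely as $(h_0+\dots+h_st^s)/(1-t)^{\alpha(G)}$ with $h_s\ne 0$; the numerator is the $h$-polynomial $h_G(t)$, and $\mathfrak a(G)=s-\alpha(G)$. $G$ is pseudo-Gorenstein$^{*}$ if $h_s=1$ and $\mathfrak a(G)=0$. $P_n$ denotes the path on $n$ vertices. *)

(* Defs.v *)
From mathcomp Require Import all_boot all_order all_algebra.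
Set Implicit Arguments. Unset Strict Implicit. Unset Printing Implicit Defensive.
Import GRing.Theory Num.Theory.

(* A finite simple graph on vertex set [N] = 'I_N is given by an edge relation
   e : rel 'I_N, assumed symmetric and irreflexive where relevant. *)

Section EdgeIdeal.
Variables (N : nat) (e : rel 'I_N).

Definition independent (A : {set 'I_N}) : bool :=
  [forall i, forall j, (i \in A) && (j \in A) ==> ~~ e i j].

Definition alpha : nat := \max_(A : {set 'I_N} | independent A) #|A|.

(* A monomial x^m of degree k of S = K[x_1..x_N] is an exponent vector
   m : 'I_N -> nat with sum k (entries bounded by k, hence 'I_k.+1).
   x^m lies in the monomial ideal I(G) iff some generator x_i x_j ({i,j} edge)
   divides it, i.e. m i > 0 and m j > 0.  *)
Definition monomials_deg (k : nat) : {set {ffun 'I_N -> 'I_k.+1}} :=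
  [set m : {ffun 'I_N -> 'I_k.+1} | \sum_i (m i : nat) == k].

Definition in_edge_ideal k (m : {ffun 'I_N -> 'I_k.+1}) : bool :=
  [exists i, exists j, e i j && (0 < m i) && (0 < m j)].

(* Hilbert function of S/I(G): dim_K (S/I(G))_k = number of monomials of
   degree k not in the monomial ideal I(G) (they form a K-basis). *)
Definition hilb_fun (k : nat) : nat :=
  #|[set m in monomials_deg k | ~~ in_edge_ideal m]|.

(* Coefficients of the h-polynomial: h(t) = HS(t) * (1-t)^alpha as a formal
   power series, where HS(t) = sum_k hilb_fun k t^k. *)
Definition h_coef (j : nat) : int :=
  \sum_(i < alpha.+1)
     ((-1) ^+ i * ('C(alpha, i))%:Z * (if (i <= j)%N then (hilb_fun (j - i))%:Z else 0))%R.

(* G is pseudo-Gorenstein*: the top nonzero coefficient h_s of h_G equals 1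
   and a(G) = s - alpha(G) = 0. *)
Definition pseudo_gorenstein_star : Prop :=
  exists s : nat,
    [/\ h_coef s = 1%R, (forall j, s < j -> h_coef j = 0%R) & s = alpha].

End EdgeIdeal.

Definition path_rel (n : nat) : rel 'I_n :=
  fun i j => (i.+1 == j :> nat) || (j.+1 == i :> nat).
Arguments path_rel n : clear implicits.

(* Main.v *)
Require Import Defs.
From mathcomp Require Import all_boot all_order all_algebra.
From mathcomp Require Import ring zify.
Set Implicit Arguments. Unset Strict Implicit. Unset Printing Implicit Defensive.
Import GRing.Theory Num.Theory.

Section Gen.
Variables (N : nat) (e : rel 'I_N).
Local Open Scope ring_scope.

Lemma indepP (A : {set 'I_N}) :
  reflect (forall i j, i \in A -> j \in A -> ~~ e i j) (independent e A).
Proof.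
apply: (iffP forallP) => [H i j Hi Hj|H i].
  by have /forallP/(_ j) := H i; rewrite Hi Hj.
by apply/forallP => j; apply/implyP => /andP[Hi Hj]; apply: H.
Qed.

Definition supp k (m : {ffun 'I_N -> 'I_k.+1}) : {set 'I_N} := [set i | (0 < m i)%N].

Lemma not_ideal k (m : {ffun 'I_N -> 'I_k.+1}) :
  ~~ in_edge_ideal e m = independent e (supp m).
Proof.
rewrite /in_edge_ideal negb_exists; apply: eq_forallb => i.
rewrite negb_exists; apply: eq_forallb => j; rewrite !inE.
by case: (e i j); case: (0 < m i)%N; case: (0 < m j)%N.
Qed.

Definition G k : {poly int} := \sum_(j < k.+1 | (0 < j)%N) 'X^j.

Definition Q k : {poly int} := \sum_(F : {set 'I_N} | independent e F) G k ^+ #|F|.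

Lemma hilb_Q k : (hilb_fun e k)%:Z = (Q k)`_k.
Proof.
rewrite /Q coef_sum.
have E (F : {set 'I_N}) : (G k ^+ #|F|)`_k =
   \sum_(m : {ffun 'I_N -> 'I_k.+1}) (if (supp m == F) && (\sum_i (m i : nat) == k)%N then 1 else 0).
  rewrite -prodr_const.
  transitivity ((\prod_i \sum_(j : 'I_k.+1) (if (0 < j)%N == (i \in F) then 'X^j else 0 : {poly int}))`_k).
    rewrite [in RHS](bigID (fun i => i \in F)) /=.
    rewrite [X in _ * X]big1 ?mulr1; last first.
      move=> i /negbTE ->; rewrite big_ord_recl /= big1 ?addr0 ?expr0 // => j _.
    apply: (congr1 (fun p : {poly int} => p`_k)); apply: eq_bigr => i ->.
    by rewrite /G big_mkcond /=; apply: eq_bigr => j _; case: (0 < j)%N.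
  rewrite bigA_distr_bigA coef_sum; apply: eq_bigr => m _.
  case: eqP => [<-|neq].
    rewrite (eq_bigr (fun i => 'X^(m i))); last by move=> i _; rewrite inE eqxx.
    rewrite (_ : \prod_i 'X^(m i) = 'X^(\sum_i (m i : nat))) ?coefXn; last exact: prodrXr.
    by rewrite eq_sym /=; case: eqP.
  have /existsP [i Hi] : [exists i, ((0 < m i)%N != (i \in F))].
    apply: contra_notT neq => /existsPn H.
    by apply/setP => x; rewrite inE; have := H x; rewrite negbK => /eqP.
  by rewrite (bigD1 i) //= (negbTE Hi) mul0r coef0.
rewrite (eq_bigr _ (fun F _ => E F)) exchange_big /=.
rewrite /hilb_fun -sum1_card -natz natr_sum /= big_mkcond /=.
apply: eq_bigr => m _.
rewrite (eq_bigr (fun F => if F == supp m then (if (\sum_i (m i : nat) == k)%N then 1 else 0) else 0)); last first.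
  by move=> F _; case: (altP (supp m =P F)) => [->|H]; rewrite ?eqxx //= eq_sym (negbTE H).
rewrite !inE not_ideal.
case: (boolP (independent e (supp m))) => Hi.
  rewrite (bigD1 (supp m)) //= eqxx [X in _ + X]big1 ?addr0 ?andbT //.
  by move=> F /andP[_ /negbTE ->].
rewrite andbF; apply/esym/big1 => F HF; case: eqP => // FE; by move: Hi; rewrite -FE HF.
Qed.

Definition eqm k (p q : {poly int}) := exists r, p - q = 'X^(k.+1) * r.

Lemma eqm_refl k p : eqm k p p.
Proof. by exists 0; rewrite subrr mulr0. Qed.

Lemma eqm_sym k p q : eqm k p q -> eqm k q p.
Proof. by case=> r E; exists (- r); rewrite mulrN -E opprB. Qed.

Lemma eqm_trans k p q s : eqm k p q -> eqm k q s -> eqm k p s.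
Proof.
case=> r1 E1 [r2 E2]; exists (r1 + r2); rewrite mulrDr -E1 -E2; ring.
Qed.

Lemma eqm_add k p1 p2 q1 q2 : eqm k p1 q1 -> eqm k p2 q2 -> eqm k (p1 + p2) (q1 + q2).
Proof.
case=> r1 E1 [r2 E2]; exists (r1 + r2); rewrite mulrDr -E1 -E2; ring.
Qed.

Lemma eqm_mul k p1 p2 q1 q2 : eqm k p1 q1 -> eqm k p2 q2 -> eqm k (p1 * p2) (q1 * q2).
Proof.
case=> r1 E1 [r2 E2]; exists (r1 * p2 + q1 * r2).
rewrite mulrDr mulrA -E1 mulrA (mulrC _ q1) -mulrA -E2; ring.
Qed.

Lemma eqm_exp k p q n : eqm k p q -> eqm k (p ^+ n) (q ^+ n).
Proof.
move=> H; elim: n => [|n IH]; first by rewrite !expr0; apply: eqm_refl.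
by rewrite !exprS; apply: eqm_mul.
Qed.

Lemma eqm_sum k (I : finType) (P : pred I) (f g : I -> {poly int}) :
  (forall i, P i -> eqm k (f i) (g i)) ->
  eqm k (\sum_(i | P i) f i) (\sum_(i | P i) g i).
Proof.
move=> H; apply: (big_ind2 (eqm k)) => //; first exact: eqm_refl.
by move=> *; apply: eqm_add.
Qed.

Lemma eqm_coef k p q j : eqm k p q -> (j <= k)%N -> p`_j = q`_j.
Proof.
case=> r E Hj; have -> : p = q + 'X^(k.+1) * r by rewrite -E; ring.
by rewrite coefD coefXnM ltnS Hj addr0.
Qed.

Lemma G_S k : G k.+1 = G k + 'X^(k.+1).
Proof. by rewrite /G big_mkcond big_ord_recr /= -big_mkcond. Qed.

Lemma G_mono k K : (k <= K)%N -> eqm k (G K) (G k).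
Proof.
move=> /subnK <-; elim: (K - k)%N => [|n IH]; first exact: eqm_refl.
rewrite addSn G_S; apply: eqm_trans (IH); exists ('X^n).
rewrite addrAC subrr add0r -exprD; congr ('X^_); lia.
Qed.

Lemma G1X k : G k * (1 - 'X) = 'X - 'X^(k.+1).
Proof.
elim: k => [|k IH].
  by rewrite /G big_mkcond big_ord1 /= mul0r expr1 subrr.
rewrite G_S mulrDl IH (exprS _ k.+1); ring.
Qed.

Lemma G1X_eqm k : eqm k (G k * (1 - 'X)) 'X.
Proof. by exists (-1); rewrite G1X; ring. Qed.

Lemma coef_h d p j : ((1 - 'X) ^+ d * p)`_j =
  \sum_(i < d.+1) (-1) ^+ i * ('C(d, i))%:Z * (if (i <= j)%N then p`_(j - i) else 0).
Proof.
rewrite addrC exprD1n mulr_suml coef_sum; apply: eq_bigr => i _.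
rewrite mulrnAl coefMn [(- 'X) ^+ i]exprNn -[(-1) ^+ i * _ * p]mulrA.
have -> : (-1 : {poly int}) ^+ i = ((-1) ^+ i)%:P by rewrite rmorphXn /= polyCN.
rewrite coefCM coefXnM -mulr_natr natz.
by case: (ltnP j i) => H; rewrite ?mulr0 ?mul0r // mulrAC.
Qed.

Lemma coef_1X r l : (r <= l)%N -> ((1 - 'X : {poly int}) ^+ r)`_l = if l == r then (-1) ^+ r else 0.
Proof.
move=> Hrl; rewrite -[(1 - 'X) ^+ r]mulr1 coef_h big_ord_recr /= big1 ?add0r.
  rewrite Hrl coef1 binn mulr1.
  have -> : ((l - r)%N == 0) = (l == r) by rewrite subn_eq0 eqn_leq Hrl andbT.
  by case: eqP; rewrite ?mulr1 ?mulr0.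
move=> i _; have Hi := ltn_ord i.
have H1 : (i <= l)%N by apply: leq_trans Hrl; apply: ltnW.
have H2 : (l - i == 0)%N = false by rewrite subn_eq0 leqNgt (leq_trans Hi Hrl).
by rewrite H1 coef1 H2 mulr0.
Qed.


Lemma indep_le (F : {set 'I_N}) : independent e F -> (#|F| <= alpha e)%N.
Proof. by move=> H; rewrite /alpha; apply: (@leq_bigmax_cond _ (independent e) (fun A => #|A|)). Qed.


Lemma h_Q j : h_coef e j = ((1 - 'X) ^+ alpha e * Q j)`_j.
Proof.
rewrite (coef_h (alpha e) (Q j) j) /h_coef; apply: eq_bigr => i _; case: ifP => // Hij.
rewrite hilb_Q; congr (_ * _).
apply: esym; apply: (eqm_coef (k := (j - i)%N)) => //.
apply: eqm_sum => F _; apply: eqm_exp; apply: G_mono; exact: leq_subr.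
Qed.

Definition T : {poly int} :=
  \sum_(F : {set 'I_N} | independent e F) 'X^#|F| * (1 - 'X) ^+ (alpha e - #|F|).

Lemma Q_T j : eqm j ((1 - 'X) ^+ alpha e * Q j) T.
Proof.
rewrite /Q /T mulr_sumr; apply: eqm_sum => F HF.
have Hm := indep_le HF.
rewrite -{1}(subnK Hm) exprD -mulrA -exprMn [_ * (1 - 'X) ^+ _]mulrC.
apply: eqm_mul; first exact: eqm_refl.
apply: eqm_exp; rewrite mulrC; exact: G1X_eqm.
Qed.

Lemma coef_T j : (alpha e <= j)%N ->
  T`_j = if j == alpha e then \sum_(F : {set 'I_N} | independent e F) (-1) ^+ (alpha e - #|F|) else 0.
Proof.
move=> Hj; rewrite /T coef_sum.
case: eqP => [->|Hne].
  apply: eq_bigr => F HF; have Hm := indep_le HF.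
  by rewrite coefXnM ltnNge Hm /= coef_1X // eqxx.
apply: big1 => F HF; have Hm := indep_le HF.
have H1 : (alpha e - #|F| <= j - #|F|)%N by apply: leq_sub2r.
have H2 : (j - #|F| == alpha e - #|F|)%N = false.
  apply/negbTE/eqP => E; apply: Hne; move: E Hm Hj; clear; lia.
by rewrite coefXnM ltnNge (leq_trans Hm Hj) /= coef_1X // H2.
Qed.

Lemma h_vanish j : (alpha e < j)%N -> h_coef e j = 0.
Proof.
move=> Hj; rewrite h_Q (eqm_coef (Q_T j)) // coef_T ?(ltnW Hj) //.
by rewrite gtn_eqF.
Qed.

Lemma h_top : h_coef e (alpha e) =
  \sum_(F : {set 'I_N} | independent e F) (-1) ^+ (alpha e - #|F|).
Proof. by rewrite h_Q (eqm_coef (Q_T _)) // coef_T // eqxx. Qed.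

End Gen.
Section Path.
Variable N : nat.
Local Notation pr := (path_rel N).

Lemma indepP' (A : {set 'I_N}) :
  reflect (forall i j, i \in A -> j \in A -> ~~ pr i j) (independent pr A).
Proof.
apply: (iffP forallP) => [H i j Hi Hj|H i].
  by have /forallP/(_ j) := H i; rewrite Hi Hj.
by apply/forallP => j; apply/implyP => /andP[Hi Hj]; apply: H.
Qed.

Definition bnd (F : {set 'I_N}) b := [forall i in F, (i < b)%N].

Lemma bndP (F : {set 'I_N}) b : reflect (forall i, i \in F -> (i < b)%N) (bnd F b).
Proof.
apply: (iffP forallP) => [H i Hi|H i]; first by have /implyP := H i; apply.
by apply/implyP; apply: H.
Qed.

Lemma far (i j : 'I_N) : (i.+1 < j)%N -> ~~ pr i j && ~~ pr j i.
Proof. rewrite /path_rel. lia. Qed.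

Lemma shrink k (x : 'I_N) (F : {set 'I_N}) : val x = k -> independent pr F -> bnd F k.+1 -> x \in F ->
  bnd (F :\ x) k.-1.
Proof.
move=> Hx /indepP' HI /bndP HB HxF; apply/bndP => i; rewrite !inE => /andP[Hix HiF].
have H1 := HB i HiF; have H2 := HI i x HiF HxF.
move: Hix H1 H2; rewrite /path_rel -(inj_eq val_inj) /= Hx; lia.
Qed.

Lemma drop k (x : 'I_N) (F : {set 'I_N}) : val x = k -> bnd F k.+1 -> x \notin F -> bnd F k.
Proof.
move=> Hx /bndP HB HxF; apply/bndP => i Hi.
have H1 := HB i Hi.
have H2 : i != x by apply: contraNneq HxF => <-.
move: H1 H2; rewrite -(inj_eq val_inj) /= Hx; lia.
Qed.

Lemma bnd_notin k (x : 'I_N) (F : {set 'I_N}) : val x = k -> bnd F k -> x \notin F.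
Proof. move=> Hx /bndP HB; apply/negP => /HB; rewrite Hx ltnn. by []. Qed.

Lemma bnd_mono (F : {set 'I_N}) b c : (b <= c)%N -> bnd F b -> bnd F c.
Proof. by move=> Hbc /bndP HB; apply/bndP => i /HB /leq_trans; apply. Qed.

Lemma bndN (F : {set 'I_N}) : bnd F N.
Proof. by apply/bndP => i _; exact: ltn_ord. Qed.

Lemma bnd0 (F : {set 'I_N}) : bnd F 0 -> F = set0.
Proof.
move=> /bndP HB; apply/setP => i; rewrite inE; apply/negbTE/negP => /HB. by [].
Qed.

Lemma indep_bound b (F : {set 'I_N}) : independent pr F -> bnd F b -> (#|F| <= uphalf b)%N.
Proof.
elim/ltn_ind: b F => b IH F HI HB.
case: b IH HB => [|k] IH HB; first by rewrite (bnd0 HB) cards0.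
case: (ltnP k N) => Hk; last first.
  apply: leq_trans (uphalf_leq (leqnSn k)).
  apply: IH => //; exact: bnd_mono Hk (bndN F).
pose x := Ordinal Hk.
case: (boolP (x \in F)) => Hx.
  have Hs := shrink (erefl : val x = k) HI HB Hx.
  have HI' : independent pr (F :\ x).
    by apply/indepP' => i j; rewrite !inE => /andP[_ Hi] /andP[_ Hj]; apply: (indepP' _ HI).
  rewrite (cardsD1 x F) Hx.
  case: k IH HB Hk x Hx Hs HI' => [|k] IH HB Hk x Hx Hs HI'.
    by rewrite (bnd0 Hs) cards0.
  have := IH k (ltnW (ltnSn k.+1)) _ HI' Hs.
  by rewrite /= add1n ltnS.
apply: leq_trans (uphalf_leq (leqnSn k)).
apply: IH => //; exact: drop (erefl : val x = k) HB Hx.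
Qed.


Local Open Scope ring_scope.

Definition Sb b : int :=
  \sum_(F : {set 'I_N} | independent pr F && bnd F b) (-1) ^+ #|F|.

Lemma indep0 : independent pr set0.
Proof. by apply/indepP' => i j; rewrite inE. Qed.

Lemma Sb0 : Sb 0 = 1.
Proof.
rewrite /Sb (big_pred1 set0) ?cards0 ?expr0 // => F /=.
apply/idP/idP => [/andP[_ /bnd0 ->]//|/eqP ->].
by rewrite indep0 /=; apply/bndP => i; rewrite inE.
Qed.

Lemma SbS k : (k < N)%N -> Sb k.+1 = Sb k - Sb k.-1.
Proof.
move=> Hk; pose x := Ordinal Hk; have Hxk : val x = k by [].
rewrite /Sb (bigID (fun F : {set 'I_N} => x \in F)) /= addrC; congr (_ + _).
  apply: eq_bigl => F; apply/idP/idP.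
    by case/andP => /andP[HI HB] Hx; rewrite HI (drop Hxk HB Hx).
  case/andP => HI HB; rewrite HI (bnd_notin Hxk HB) andbT /=.
  exact: bnd_mono (leqnSn k) HB.
rewrite (reindex_onto (fun F : {set 'I_N} => x |: F) (fun F : {set 'I_N} => F :\ x)) /=; last first.
  by move=> F /andP[_ Hx]; rewrite setD1K.
rewrite -sumrN; apply: eq_big => F.
  apply/idP/idP.
    case/andP => /andP[/andP[HI HB] _] HE.
    have HxF : x \notin F.
      by apply/negP => Hx; have := setD11 x (x |: F); rewrite (eqP HE) Hx.
    have HIF : independent pr F.
      by apply/indepP' => i j Hi Hj; apply: (indepP' _ HI); rewrite !inE ?Hi ?Hj orbT.
    rewrite HIF /=; rewrite -(eqP HE); apply: shrink Hxk HI HB _; exact: setU11.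
  case/andP => HI HB.
  have HxF := bnd_notin (k := k) Hxk (bnd_mono (leq_pred k) HB).
  rewrite setU11 setU1K // eqxx !andbT; apply/andP; split.
    apply/indepP' => i j; rewrite !inE => /orP[/eqP->|Hi] /orP[/eqP->|Hj].
    - by rewrite /path_rel; lia.
    - have Hj' := bndP _ _ HB j Hj.
      have Hjx : (j.+1 < x)%N by rewrite Hxk; move: Hj'; clear; lia.
      by have /andP[_ ->] := far Hjx.
    - have Hi' := bndP _ _ HB i Hi.
      have Hix : (i.+1 < x)%N by rewrite Hxk; move: Hi'; clear; lia.
      by have /andP[-> _] := far Hix.
    - exact: (indepP' _ HI).
  apply/bndP => i; rewrite !inE => /orP[/eqP->|Hi]; first by rewrite Hxk.
  by have := bndP _ _ HB i Hi; move: (i : nat); clear; move=> i; lia.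
move=> /andP[_ HE].
have HxF : x \notin F.
  by apply/negP => Hx; have := setD11 x (x |: F); rewrite (eqP HE) Hx.
by rewrite cardsU1 HxF add1n exprS mulN1r.
Qed.


Lemma count_even k : (\sum_(0 <= i < k | ~~ odd i) 1 = uphalf k)%N.
Proof.
elim: k => [|k IH]; first by rewrite big_geq.
rewrite big_mkcond big_nat_recr //= -big_mkcond IH.
rewrite !uphalf_half /=; case: (odd k) => /=; rewrite ?addn0 ?add0n ?addn1 //.
Qed.

Lemma alpha_path : alpha pr = uphalf N.
Proof.
apply/eqP; rewrite eqn_leq; apply/andP; split.
  apply/bigmax_leqP => F HF; rewrite -[N]/(N : nat).
  exact: indep_bound HF (bndN F).
pose E := [set i : 'I_N | ~~ odd i].
have HE : independent pr E.
  apply/indepP' => i j; rewrite !inE /path_rel => Hi Hj.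
  apply/negP => /orP[/eqP Hij|/eqP Hji].
    by move: Hj; rewrite -Hij /= Hi.
  by move: Hi; rewrite -Hji /= Hj.
have -> : uphalf N = #|E|.
  rewrite -count_even -sum1_card big_mkord.
  by apply: eq_bigl => i; rewrite inE.
exact: (@leq_bigmax_cond _ (independent pr) (fun A => #|A|)).
Qed.

End Path.

Fixpoint aa (n : nat) : int :=
  match n with
  | 0 => 1
  | 1 => 0
  | (S m as m1).+1 => (aa m1 - aa m)%R
  end.

Lemma aaS k : aa k.+1 = (aa k - aa k.-1)%R.
Proof. by case: k. Qed.

Lemma Sb_a N k : (k <= N)%N -> Sb N k = aa k.
Proof.
elim/ltn_ind: k => k IH Hk.
case: k IH Hk => [|k] IH Hk; first exact: Sb0.
rewrite SbS // aaS IH // ?IH //; last exact: ltnW.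
- case: k {IH Hk} => //= k; exact: leqnSn.
- by apply: leq_trans (leq_pred k) (ltnW Hk).
Qed.


Local Open Scope ring_scope.

Lemma sign_sub (d m : nat) : (m <= d)%N -> (-1) ^+ (d - m) = (-1) ^+ d * (-1) ^+ m :> int.
Proof.
move=> H; rewrite -{2}(subnK H) exprD -mulrA -exprMn mulrNN mulr1 expr1n mulr1 //.
Qed.

Lemma aa3 n : aa n.+3 = - aa n.
Proof.
have E m : aa m.+2 = aa m.+1 - aa m by [].
rewrite E E; ring.
Qed.

Lemma aa6 n : aa n.+3.+3 = aa n.
Proof. by rewrite (aa3 n.+3) aa3 opprK. Qed.

Definition cc n : int := (-1) ^+ (uphalf n) * aa n.

Lemma cc12 m : cc (12 + m) = cc m.
Proof.
change (cc m.+4.+4.+4 = cc m); rewrite /cc.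
have -> : uphalf m.+4.+4.+4 = (uphalf m).+3.+3 by [].
have -> : aa m.+4.+4.+4 = aa m by rewrite (aa6 m.+3.+3) aa6.
by rewrite !exprS !mulN1r !opprK.
Qed.

Lemma cc_mod n : cc n = cc (n %% 12).
Proof.
elim/ltn_ind: n => n IH.
case: (ltnP n 12) => Hn; first by rewrite modn_small.
have E : n = (12 + (n - 12))%N by rewrite addnC subnK.
rewrite E modnDl cc12 -IH //; move: Hn; clear; lia.
Qed.

Lemma cc_small r : (r < 12)%N -> (cc r == 1) = (r \in [:: 0; 2; 9; 11]%N).
Proof.
by do 12! (case: r => [|r]; first by move=> _; vm_compute).
Qed.

Local Close Scope ring_scope.

Theorem theorem2p4 (n : nat) :
  1 <= n ->
  (pseudo_gorenstein_star (path_rel n) <-> (n %% 12) \in [:: 0; 2; 9; 11]).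
Proof.
move=> _.
have key : pseudo_gorenstein_star (path_rel n) <->
    h_coef (path_rel n) (alpha (path_rel n)) = 1%R.
  split; first by case=> s [H1 H2 H3]; rewrite -H3.
  move=> H; exists (alpha (path_rel n)); split => // j Hj; exact: h_vanish.
rewrite key h_top alpha_path.
rewrite (eq_bigr (fun F : {set 'I_n} => ((-1) ^+ (uphalf n) * (-1) ^+ #|F| : int)%R)); last first.
  move=> F HF; apply: sign_sub; exact: indep_bound HF (bndN F).
rewrite -mulr_sumr.
have -> : (\sum_(F : {set 'I_n} | independent (path_rel n) F) (-1) ^+ #|F| = Sb n n)%R.
  by apply: eq_bigl => F; rewrite bndN andbT.
rewrite Sb_a // -/(cc n) cc_mod -cc_small ?ltn_pmod //.
by split => [->|/eqP].
Qed.
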